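(* Let $\mathcal G=(\mathcal R,c,\mathcal S)$ be a singleton congestion game structure with feasible resource sets $\mathcal R^h$, $h\in\mathcal H$, let $\precsim$ be a weak order on $\mathcal H$ and $\Gamma^{\precsim}$ the associated region, and let $C$ be a cost class of $\precsim$. Then: (a) For every $\mu\in\Gamma^{\precsim}$ and every equilibrium load vector $x$ of $(\mathcal G,\mu)$, the vector $(x_r)_{r\in\mathcal R_C}$ is an equilibrium load vector of the single-commodity singleton game $(\mathcal G_C,\mu_C)$, where $\mu_C:=\sum_{h\in C}\mu^h$. (b) If, for every demand in $\mathbb R_+$, the game $\mathcal G_C$ has a unique equilibrium load vector, then for $\mu\in\Gamma^{\precsim}$ the equilibrium loads $x_r(\mu)$, $r\in\mathcal R_C$, are uniquely determined and can be written as $x_r(\mu)=F_r(\mu_C)$ for nondecreasing functions $F_r:\mathbb R_+\to\mathbb R$; equivalently, the family of maps $\{\mu\mapsto x_r(\mu): r\in\mathcal R_C\}$ is comonotonic on $\Gamma^{\precsim}$.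
   Context: A congestion game structure has a finite set $\mathcal R$ of resources with continuous nondecreasing costs $c_r:\mathbb R_+\to\mathbb R_+$ and a finite set $\mathcal H$ of commodities; it is a singleton congestion game when every feasible strategy of commodity $h$ is a single resource, so its strategy set is identified with a nonempty set $\mathcal R^h\subseteq\mathcal R$. For a demand $\mu\in\mathbb R_+^{\mathcal H}$, a feasible flow assigns $f^h_r\ge0$ to $r\in\mathcal R^h$ with $\sum_{r\in\mathcal R^h}f^h_r=\mu^h$; loads are $x_r=\sum_{h: r\in\mathcal R^h}f^h_r$. A Wardrop equilibrium is a feasible flow such that for each $h$ there is $\lambda^h$ with $c_r(x_r)=\lambda^h$ if $r\in\mathcal R^h$, $f^h_r>0$, and $c_r(x_r)\ge\lambda^h$ for all $r\in\mathcal R^h$; an equilibrium load vector is the load vector of a Wardrop equilibrium. The equilibrium costs $\lambda^h(\mu)$ do not depend on which equilibrium is chosen, so $\mu\mapsto\lambda(\mu)$ is well defined. For a weak order (complete preorder) $\precsim$ on $\mathcal H$, define $\Gamma^{\precsim}=\{\mu\in\mathbb R_+^{\mathcal H}: \lambda^h(\mu)\le\lambda^{h'}(\mu)\iff h\precsim h' \text{ for all } h,h'\in\mathcal H\}$. Write $h\sim h'$ if $h\precsim h'$ and $h'\precsim h$, and $h'\succ h$ if $h\precsim h'$ but not $h'\precsim h$. The equivalence classes of $\sim$ are the cost classes; for a cost class $C$, $h'\succ C$ means $h'\succ h$ for $h\in C$. Set $\mathcal R_C=\big(\bigcup_{h\in C}\mathcal R^h\big)\setminus\big(\bigcup_{h'\succ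 C}\mathcal R^{h'}\big)$. $\mathcal G_C$ denotes the singleton congestion game with resources $\mathcal R_C$ (same costs $c_r$) and a single commodity whose feasible strategies are all singletons $\{r\}$, $r\in\mathcal R_C$. A family of functions $\{\psi_i:\Omega\to\mathbb R\}_{i\in A}$ is comonotonic if $(\psi_i(\omega_1)-\psi_i(\omega_2))(\psi_j(\omega_1)-\psi_j(\omega_2))\ge0$ for all $i,j\in A$ and $\omega_1,\omega_2\in\Omega$. *)

(* Defs.v *)
From HB Require Import structures.
From mathcomp Require Import all_boot all_order all_algebra.
From mathcomp Require Import all_classical all_reals all_analysis.
Set Implicit Arguments. Unset Strict Implicit. Unset Printing Implicit Defensive.
Import Order.TTheory GRing.Theory Num.Theory.
Import numFieldNormedType.Exports.
Local Open Scope classical_set_scope.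
Local Open Scope ring_scope.

Section Singleton.
Variables (R : realType) (Res Com : finType).

(* A singleton congestion game structure: costs c r on R_+ and, for each
   commodity h, its set of feasible resources S h (= R^h). *)
Variables (c : Res -> R -> R) (S : Com -> {set Res}).

Definition feasible_flow (mu : Com -> R) (f : Com -> Res -> R) : Prop :=
  (forall h r, 0 <= f h r) /\
  (forall h r, r \notin S h -> f h r = 0) /\
  (forall h, \sum_(r in S h) f h r = mu h).

Definition load (f : Com -> Res -> R) (r : Res) : R :=
  \sum_(h : Com | r \in S h) f h r.

Definition wardrop (mu : Com -> R) (f : Com -> Res -> R) : Prop :=
  feasible_flow mu f /\
  forall h, exists lam : R, forall r, r \in S h ->
    (0 < f h r -> c r (load f r) = lam) /\ lam <= c r (load f r).

Definition eq_load (mu : Com -> R) (x : Res -> R) : Prop :=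
  exists f, wardrop mu f /\ forall r, x r = load f r.

Definition is_eqcost (x : Res -> R) (h : Com) (l : R) : Prop :=
  (exists2 r, r \in S h & c r (x r) = l) /\
  (forall r, r \in S h -> l <= c r (x r)).

End Singleton.

Definition good_costs (R : realType) (Res : Type) (c : Res -> R -> R) : Prop :=
  forall r, (forall t, 0 <= t -> 0 <= c r t) /\
            (forall s t, 0 <= s -> s <= t -> c r s <= c r t) /\
            {within [set t : R | 0 <= t], continuous (c r)}.

Definition weak_order (Com : Type) (le : rel Com) : Prop :=
  total le /\ transitive le.

Definition Gamma (R : realType) (Res Com : finType) (c : Res -> R -> R)
  (S : Com -> {set Res}) (le : rel Com) (mu : Com -> R) : Prop :=
  (forall h, 0 <= mu h) /\
  exists x (lam : Com -> R), eq_load c S mu x /\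
    (forall h, is_eqcost c S x h (lam h)) /\
    (forall h h', lam h <= lam h' <-> le h h').

Definition cost_class (Com : finType) (le : rel Com) (C : {set Com}) : Prop :=
  exists h0, C = [set h | le h h0 && le h0 h]%SET.

Definition above_class (Com : finType) (le : rel Com) (C : {set Com}) (h' : Com) : bool :=
  [exists h in C, le h h' && ~~ le h' h].

Definition RC (Res Com : finType) (S : Com -> {set Res}) (le : rel Com)
  (C : {set Com}) : {set Res} :=
  (\bigcup_(h in C) S h) :\: (\bigcup_(h' | above_class le C h') S h').

Definition SC (Res Com : finType) (S : Com -> {set Res}) (le : rel Com)
  (C : {set Com}) : unit -> {set Res} := fun _ => RC S le C.

Definition eq_load_C (R : realType) (Res Com : finType) (c : Res -> R -> R)
  (S : Com -> {set Res}) (le : rel Com) (C : {set Com}) (m : R) (y : Res -> R) : Prop :=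
  exists z, eq_load c (SC S le C) (fun _ => m) z /\
    forall r, r \in RC S le C -> z r = y r.

(* Main.v *)
Require Import Defs.
From HB Require Import structures.
From mathcomp Require Import all_boot all_order all_algebra.
From mathcomp Require Import all_classical all_reals all_analysis.
From mathcomp Require Import ring lra.
Import Order.TTheory GRing.Theory Num.Theory.
Local Open Scope ring_scope.
Set Implicit Arguments. Unset Strict Implicit.

Lemma sum_sub (R : realType) (I : finType) (P : pred I) (F : I -> R) :
  (forall i, ~~ P i -> F i = 0) -> \sum_(i | P i) F i = \sum_i F i.
Proof.
move=> H; rewrite big_mkcond; apply: eq_bigr => i _.
by case: ifP => // /negbT /H ->.
Qed.

Section Helpers.
Variables (R : realType) (Res Com : finType) (c : Res -> R -> R) (S : Com -> {set Res}).
Hypothesis mono : forall r s t, 0 <= s -> s <= t -> c r s <= c r t.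

Lemma load_full {f : Com -> Res -> R} {mu : Com -> R} : feasible_flow S mu f -> forall r, load S f r = \sum_h f h r.
Proof.
move=> [f0 [fz fs]] r; rewrite /load big_mkcond; apply: eq_bigr => h _.
by case: ifP => // /negbT /fz ->.
Qed.

Lemma flow_full {f : Com -> Res -> R} {mu : Com -> R} : feasible_flow S mu f -> forall h, \sum_r f h r = mu h.
Proof.
move=> [f0 [fz fs]] h; rewrite -fs; symmetry; apply: sum_sub => r; exact: fz.
Qed.

Lemma load_ge0 {f : Com -> Res -> R} {mu : Com -> R} : feasible_flow S mu f -> forall r, 0 <= load S f r.
Proof. move=> [f0 _] r; apply: sumr_ge0 => h _; exact: f0. Qed.

Lemma sum_exch {f : Com -> Res -> R} {mu : Com -> R} : feasible_flow S mu f ->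
  forall a : Res -> R, \sum_r a r * load S f r = \sum_h \sum_r a r * f h r.
Proof.
move=> Ff a; under eq_bigr do rewrite (load_full Ff) mulr_sumr.
by rewrite exchange_big.
Qed.

Lemma wardrop_le {mu : Com -> R} {f g : Com -> Res -> R} : wardrop c S mu f -> feasible_flow S mu g ->
  \sum_r c r (load S f r) * load S f r <= \sum_r c r (load S f r) * load S g r.
Proof.
move=> [Ff Wf] Fg.
rewrite (sum_exch Ff) (sum_exch Fg).
apply: ler_sum => h _.
have [lam Hl] := Wf h.
have -> : \sum_r c r (load S f r) * f h r = \sum_r lam * f h r.
  apply: eq_bigr => r _.
  case: Ff => [f0 [fz _]].
  case: (boolP (r \in S h)) => rS; last by rewrite fz // !mulr0.
  have := f0 h r; rewrite le_eqVlt => /orP[/eqP <-|fp]; first by rewrite !mulr0.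
  by rewrite (proj1 (Hl r rS) fp).
apply: (@le_trans _ _ (\sum_r lam * g h r)).
  by rewrite -!mulr_sumr (flow_full Ff) (flow_full Fg).
apply: ler_sum => r _.
case: Fg => [g0 [gz _]].
case: (boolP (r \in S h)) => rS; last by rewrite gz // !mulr0.
by apply: ler_wpM2r; [exact: g0 | exact: (proj2 (Hl r rS))].
Qed.

Lemma cost_unique {mu : Com -> R} {f g : Com -> Res -> R} : wardrop c S mu f -> wardrop c S mu g ->
  forall r, c r (load S f r) = c r (load S g r).
Proof.
move=> Wf Wg.
set a := fun r => c r (load S f r); set b := fun r => c r (load S g r).
set x := load S f; set y := load S g.
have H1 := wardrop_le Wf (proj1 Wg).
have H2 := wardrop_le Wg (proj1 Wf).
have x0 := load_ge0 (proj1 Wf); have y0 := load_ge0 (proj1 Wg).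
have Tge : forall r, 0 <= (a r - b r) * (x r - y r).
  move=> r; have [xy|yx] := leP (x r) (y r).
    apply: mulr_le0; last by rewrite subr_le0.
    by rewrite subr_le0; apply: mono.
  apply: mulr_ge0; last by rewrite subr_ge0 ltW.
  by rewrite subr_ge0; apply: mono => //; rewrite ltW.
have Hs : \sum_r (a r - b r) * (x r - y r) = 0.
  apply/eqP; rewrite eq_le [0 <= _]sumr_ge0 ?andbT; last by move=> r _; exact: Tge.
  have -> : \sum_r (a r - b r) * (x r - y r) =
     (\sum_r a r * x r - \sum_r a r * y r) + (\sum_r b r * y r - \sum_r b r * x r).
    rewrite -!sumrB -big_split /=; apply: eq_bigr => r _; ring.
  lra.
move=> r; have := @psumr_eq0P _ _ predT _ (fun r _ => Tge r) Hs r isT.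
move/eqP; rewrite mulf_eq0 => /orP[|]; rewrite subr_eq0 => /eqP //.
by rewrite /a /b => ->.
Qed.

End Helpers.

Section Single.
Variables (R : realType) (Res Com : finType) (c : Res -> R -> R) (S : Com -> {set Res})
  (le : rel Com) (C : {set Com}).
Hypothesis mono : forall r s t, 0 <= s -> s <= t -> c r s <= c r t.

Definition Peq (T : {set Res}) (m : R) (y : Res -> R) :=
  (forall r, r \in T -> 0 <= y r) /\ \sum_(r in T) y r = m /\
  exists lam, forall r, r \in T -> (0 < y r -> c r (y r) = lam) /\ lam <= c r (y r).

Lemma loadSC (f : unit -> Res -> R) r :
  load (SC S le C) f r = if r \in RC S le C then f tt r else 0.
Proof.
rewrite /load /SC; case: ifP => H.
  by apply: big_pred1 => u; case: u.
by rewrite big_pred0_eq.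
Qed.

Lemma P_eqC m y : Peq (RC S le C) m y -> eq_load_C c S le C m y.
Proof.
move=> [y0 [ys [lam Hl]]].
pose f := fun (_ : unit) r => if r \in RC S le C then y r else 0.
exists (load (SC S le C) f); split; last first.
  by move=> r rC; rewrite loadSC rC /f rC.
exists f; split => //; split.
  split; first by move=> u r; rewrite /f; case: ifP => // /y0.
  split; first by move=> u r /negbTE H; rewrite /f H.
  move=> u; rewrite -ys; apply: eq_bigr => r rC; by rewrite /f rC.
move=> u; exists lam => r; rewrite /SC => rC.
by rewrite loadSC rC /f rC; apply: Hl.
Qed.

Lemma eqC_P m y : eq_load_C c S le C m y -> Peq (RC S le C) m y.
Proof.
move=> [z [[f [[[f0 [fz fs]] Wf] zl]] zy]].
have E : forall r, r \in RC S le C -> y r = f tt r.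
  by move=> r rC; rewrite -zy // zl loadSC rC.
split; first by move=> r rC; rewrite E.
split; first by rewrite -(fs tt); apply: eq_bigr => r /E.
have [lam Hl] := Wf tt; exists lam => r rC.
have := Hl r rC; rewrite loadSC rC -E //.
Qed.


Lemma mono_P (T : {set Res}) s t y1 y2 : s <= t -> Peq T s y1 -> Peq T t y2 ->
  (forall y y', Peq T s y -> Peq T s y' -> forall r, r \in T -> y r = y' r) ->
  forall r, r \in T -> y1 r <= y2 r.
Proof.
move=> st P1 P2 U r rT.
move: (P1) (P2) => [p1 [s1 [l1 H1]]] [p2 [s2 [l2 H2]]].
rewrite leNgt; apply/negP => lt21.
have [r' r'T lt12] : exists2 r', r' \in T & y1 r' < y2 r'.
  case: (boolP [exists r', (r' \in T) && (y1 r' < y2 r')]).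
    by move/existsP => [r' /andP[a b]]; exists r'.
  rewrite negb_exists => /forallP Hn.
  have Hge : forall q, q \in T -> 0 <= y1 q - y2 q.
    by move=> q qT; have := Hn q; rewrite qT /= -leNgt subr_ge0.
  have Hsum : \sum_(q in T) (y1 q - y2 q) = 0.
    apply/eqP; rewrite eq_le [0 <= _]sumr_ge0 ?andbT //.
    by rewrite sumrB s1 s2 subr_le0.
  have := psumr_eq0P Hge Hsum rT.
  by move/eqP; rewrite subr_eq0 => /eqP E; move: lt21; rewrite E ltxx.
have y2r0 := p2 r rT; have y1r'0 := p1 r' r'T.
have c1r : c r (y1 r) = l1 by apply: (proj1 (H1 r rT)); apply: le_lt_trans lt21.
have c2r' : c r' (y2 r') = l2 by apply: (proj1 (H2 r' r'T)); apply: le_lt_trans lt12.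
have m1 : c r (y2 r) <= c r (y1 r) by apply: mono => //; exact: ltW.
have m2 : c r' (y1 r') <= c r' (y2 r') by apply: mono => //; exact: ltW.
have b2 := proj2 (H2 r rT); have b1 := proj2 (H1 r' r'T).
have l12 : l1 = l2 by apply/eqP; rewrite eq_le; apply/andP; split; lra.
have rr' : r' != r.
  by apply/eqP => E; move: lt12 lt21; rewrite E => a b; lra.
pose d := Order.min (y1 r - y2 r) (y2 r' - y1 r').
have d0 : 0 < d by rewrite lt_min !subr_gt0 lt21 lt12.
have d1 : d <= y1 r - y2 r by rewrite ge_min lexx.
have d2 : d <= y2 r' - y1 r' by rewrite ge_min lexx orbT.
pose z := fun q => if q == r then y1 r - d else if q == r' then y1 r' + d else y1 q.
have zr : z r = y1 r - d by rewrite /z eqxx.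
have zr' : z r' = y1 r' + d by rewrite /z (negbTE rr') eqxx.
have zq : forall q, q != r -> q != r' -> z q = y1 q.
  by move=> q a b; rewrite /z (negbTE a) (negbTE b).
have Pz : Peq T s z.
  split.
    move=> q qT; case: (eqVneq q r) => [->|qr]; first by rewrite zr; lra.
    case: (eqVneq q r') => [->|qr']; first by rewrite zr'; lra.
    by rewrite zq //; apply: p1.
  split.
    rewrite -s1 (bigD1 r) //= [in RHS](bigD1 r) //=.
    rewrite (bigD1 r') /=; last by rewrite r'T rr'.
    rewrite [in RHS](bigD1 r') /=; last by rewrite r'T rr'.
    rewrite zr zr' (eq_bigr y1); first lra.
    by move=> q /andP[/andP[_ a] b]; apply: zq.
  exists l1 => q qT.
  case: (eqVneq q r) => [->|qr].
    have : c r (y2 r) <= c r (z r) by apply: mono; lra.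
    have : c r (z r) <= c r (y1 r) by apply: mono; lra.
    move=> a b; have E : c r (z r) = l1 by lra.
    by rewrite E.
  case: (eqVneq q r') => [->|qr'].
    have : c r' (y1 r') <= c r' (z r') by apply: mono; lra.
    have : c r' (z r') <= c r' (y2 r') by apply: mono; lra.
    move=> a b; have E : c r' (z r') = l1 by lra.
    by rewrite E.
  by rewrite zq //; apply: H1.
have := U y1 z P1 Pz r rT; rewrite zr; lra.
Qed.


Hypothesis wo : weak_order le.
Hypothesis cc : cost_class le C.

Lemma partA (mu : Com -> R) x : Gamma c S le mu -> eq_load c S mu x ->
  Peq (RC S le C) (\sum_(h in C) mu h) x.
Proof.
move=> [mu0 [x0 [lam [[g [Wg gx]] [Hc Hord]]]]] [f [Wf fx]].
have Ff := proj1 Wf.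
have cu := cost_unique mono Wf Wg.
have E1 : forall h r, r \in S h -> lam h <= c r (x r).
  by move=> h r rS; rewrite fx cu -gx; apply: (proj2 (Hc h)).
have E2 : forall h r, r \in S h -> 0 < f h r -> c r (x r) = lam h.
  move=> h r rS fp; have [[r0 r0S cr0] _] := Hc h.
  have [l Hl] := proj2 Wf h.
  have a := proj1 (Hl r rS) fp; have b := proj2 (Hl r0 r0S).
  rewrite gx -cu in cr0.
  have := E1 h r rS; rewrite fx => e; apply/eqP; rewrite eq_le e andbT.
  by rewrite a -cr0.
case: wo => tot tr.
have refl : forall h, le h h by move=> h; have := tot h h; rewrite orbb.
case: cc => h0 Ceq.
have h0C : h0 \in C by rewrite Ceq inE refl.
have lamC : forall h, h \in C -> lam h = lam h0.
  move=> h; rewrite Ceq inE => /andP[a b]; apply/eqP; rewrite eq_le.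
  by rewrite (proj2 (Hord _ _) a) (proj2 (Hord _ _) b).
have above : forall h', above_class le C h' -> lam h0 < lam h'.
  move=> h' /existsP[h /andP[hC /andP[a b]]].
  rewrite -(lamC h hC) lt_neqAle (proj2 (Hord _ _) a) andbT.
  apply/negP => /eqP E; move/negP: b; apply; apply: (proj1 (Hord _ _)).
  by rewrite E.
have below : forall h', h' \notin C -> ~~ above_class le C h' -> lam h' < lam h0.
  move=> h' hn ha.
  case: (boolP (le h' h0)) => a.
    have b : ~~ le h0 h' by apply: contra hn => b; rewrite Ceq inE a b.
    rewrite lt_neqAle (proj2 (Hord _ _) a) andbT.
    apply/negP => /eqP E; move/negP: b; apply; apply: (proj1 (Hord _ _)).
    by rewrite E.
  have b : le h0 h' by have := tot h' h0; rewrite (negbTE a).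
  exfalso; move/negP: ha; apply; apply/existsP; exists h0.
  by rewrite h0C b a.
have pz : forall h r, f h r = 0 \/ 0 < f h r.
  move=> h r; have := proj1 Ff h r; rewrite le_eqVlt => /orP[/eqP <-|]; by [left|right].
have fz : forall h r, r \notin S h -> f h r = 0 by move=> h r; apply: (proj1 (proj2 Ff)).
have RCP : forall r, r \in RC S le C ->
    (exists2 h, h \in C & r \in S h) /\ (forall h', above_class le C h' -> r \notin S h').
  move=> r; rewrite /RC inE => /andP[a /bigcupP[h hC rS]]; split; first by exists h.
  move=> h' ha; apply: contra a => rS'; apply/bigcupP; by exists h'.
have F3 : forall r, r \in RC S le C -> lam h0 <= c r (x r).
  move=> r /RCP[[h hC rS] _]; rewrite -(lamC h hC); exact: E1.
have F1 : forall h r, r \in RC S le C -> h \notin C -> f h r = 0.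
  move=> h r rC hn; case: (boolP (above_class le C h)) => ha.
    by apply: fz; apply: (proj2 (RCP r rC)).
  case: (pz h r) => // fp.
  case: (boolP (r \in S h)) => rS; last by rewrite fz.
  have := E2 h r rS fp; have := below h hn ha; have := F3 r rC. move=> a b e; lra.
have F2 : forall h r, h \in C -> r \notin RC S le C -> f h r = 0.
  move=> h r hC rn; case: (pz h r) => // fp.
  case: (boolP (r \in S h)) => rS; last by rewrite fz.
  move: rn; rewrite /RC inE negb_and negbK => /orP[]; last first.
    by move/bigcupP => [];  exists h.
  move/bigcupP => [h' ha rS'].
  have := E2 h r rS fp; have := E1 h' r rS'; have := above h' ha; rewrite (lamC h hC).
  move=> a b e; lra.
have xC : forall r, r \in RC S le C -> x r = \sum_(h in C) f h r.
  move=> r rC; rewrite fx (load_full Ff) (sum_sub (P := fun h => h \in C)) //.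
  by move=> h; apply: F1.
split; first by move=> r _; rewrite fx; exact: load_ge0 Ff r.
split.
  rewrite (eq_bigr _ xC) exchange_big /=; apply: eq_bigr => h hC.
  rewrite -(flow_full Ff h) (sum_sub (P := fun r => r \in RC S le C)) //.
  by move=> r; apply: F2.
exists (lam h0) => r rC; split; last exact: F3.
move=> xp.
case: (boolP [exists h, (h \in C) && (0 < f h r)]).
  move/existsP => [h /andP[hC fp]].
  case: (boolP (r \in S h)) => rS; last by move: fp; rewrite fz // ltxx.
  by rewrite (E2 h r rS fp) lamC.
rewrite negb_exists => /forallP Hn.
move: xp; rewrite xC // big1 ?ltxx // => h hC.
by case: (pz h r) => // fp; move: (Hn h); rewrite hC fp.
Qed.

End Single.

Unset Implicit Arguments.

Theorem theorem4p1 (R : realType) (Res Com : finType)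
  (c : Res -> R -> R) (S : Com -> {set Res}) (le : rel Com) (C : {set Com}) :
  good_costs c ->
  (forall h, exists r, r \in S h) ->
  weak_order le ->
  cost_class le C ->
  (* (a) *)
  (forall (mu : Com -> R) (x : Res -> R),
     Gamma c S le mu -> eq_load c S mu x ->
     eq_load_C c S le C (\sum_(h in C) mu h) x) /\
  (* (b) *)
  ((forall m : R, 0 <= m ->
      (exists y, eq_load_C c S le C m y) /\
      (forall y1 y2, eq_load_C c S le C m y1 -> eq_load_C c S le C m y2 ->
         forall r, r \in RC S le C -> y1 r = y2 r)) ->
   (forall mu x1 x2, Gamma c S le mu -> eq_load c S mu x1 -> eq_load c S mu x2 ->
      forall r, r \in RC S le C -> x1 r = x2 r) /\
   (exists F : Res -> R -> R,
      (forall r, r \in RC S le C ->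
         forall s t, 0 <= s -> s <= t -> F r s <= F r t) /\
      (forall mu x, Gamma c S le mu -> eq_load c S mu x ->
         forall r, r \in RC S le C -> x r = F r (\sum_(h in C) mu h))) /\
   (forall mu1 mu2 x1 x2, Gamma c S le mu1 -> Gamma c S le mu2 ->
      eq_load c S mu1 x1 -> eq_load c S mu2 x2 ->
      forall r r', r \in RC S le C -> r' \in RC S le C ->
        0 <= (x1 r - x2 r) * (x1 r' - x2 r'))).
Proof.
move=> gc _ wo cc.
have mono : forall r s t, 0 <= s -> s <= t -> c r s <= c r t.
  by move=> r; case: (gc r) => _ [].
have pA := partA mono wo cc.
have A : forall (mu : Com -> R) (x : Res -> R),
     Gamma c S le mu -> eq_load c S mu x ->
     eq_load_C c S le C (\sum_(h in C) mu h) x.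
  by move=> mu x G E; apply: P_eqC; apply: pA.
split => // Hb.
have muC0 : forall mu, Gamma c S le mu -> 0 <= \sum_(h in C) mu h.
  by move=> mu [mu0 _]; apply: sumr_ge0 => h _.
have B1 : forall mu x1 x2, Gamma c S le mu -> eq_load c S mu x1 -> eq_load c S mu x2 ->
      forall r, r \in RC S le C -> x1 r = x2 r.
  move=> mu x1 x2 G E1 E2; apply: (proj2 (Hb _ (muC0 _ G))); by apply: A.
have [g Hg] : {g : R -> Res -> R & forall m, 0 <= m -> eq_load_C c S le C m (g m)}.
  apply: (@choice R (Res -> R) (fun m y => 0 <= m -> eq_load_C c S le C m y)) => m; case: (boolP (0 <= m)) => m0.
    by have [[y Hy] _] := Hb m m0; exists y.
  by exists (fun _ => 0) => H; exfalso; move/negP: m0; apply.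
have FE : forall mu x, Gamma c S le mu -> eq_load c S mu x ->
         forall r, r \in RC S le C -> x r = g (\sum_(h in C) mu h) r.
  move=> mu x G E r rC; apply: (proj2 (Hb _ (muC0 _ G))) => //; first exact: A.
  exact: Hg (muC0 _ G).
have Fmono : forall r, r \in RC S le C ->
         forall s t, 0 <= s -> s <= t -> g s r <= g t r.
  move=> r rC s t s0 st.
  apply: (mono_P mono st (eqC_P (Hg s s0)) (eqC_P (Hg t (le_trans s0 st)))) => //.
  move=> y y' Py Py'; apply: (proj2 (Hb s s0)); exact: P_eqC.
split => //; split; first by exists (fun r m => g m r).
move=> mu1 mu2 x1 x2 G1 G2 E1 E2 r r' rC r'C.
rewrite (FE _ _ G1 E1 r rC) (FE _ _ G1 E1 r' r'C) (FE _ _ G2 E2 r rC) (FE _ _ G2 E2 r' r'C).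
have z1 := muC0 _ G1; have z2 := muC0 _ G2.
case: (leP (\sum_(h in C) mu1 h) (\sum_(h in C) mu2 h)) => m12.
  by apply: mulr_le0; rewrite subr_le0; apply: Fmono.
by apply: mulr_ge0; rewrite subr_ge0; apply: Fmono => //; apply: ltW.
Qed.
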